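(* The policy Match the Longest is non-expansive: for all $x,x'\in\mathbb X$, all $v\in\mathcal V$ and all $\sigma\in\mathcal S$, $$\|x'\circledcirc_{\textsc{ml}}(v,\sigma)-x\circledcirc_{\textsc{ml}}(v,\sigma)\|_1\le\|x'-x\|_1.$$
   Context: $G=(\mathcal V,\mathcal E)$ is a finite connected simple graph, $i - j$ denotes adjacency, $\mathcal E(v)$ the neighbours of $v$. $\mathbb X=\{x\in\mathbb N^{\mathcal V}: x(i)x(j)=0 \text{ whenever } i - j\}$. A list of preferences $\sigma=(\sigma(i))_{i\in\mathcal V}\in\mathcal S$ gives for each class $i$ a linear ordering $\sigma(i)$ of $\mathcal E(i)$; for ML these are drawn uniformly on $\mathcal S$. With $\mathcal P(x,v)=\{j\in\mathcal E(v):x(j)>0\}$, set $x\circledcirc_{\textsc{ml}}(v,\sigma)=x+\mathbf e_v$ if $\mathcal P(x,v)=\emptyset$, and $x-\mathbf e_{p(x,v,\sigma)}$ otherwise, where $\mathbf e_i$ is the $i$-th canonical basis vector and $p(x,v,\sigma)$ is the first element, in the ordering $\sigma(v)$, of $\mathcal L(x,v)=\{i\in\mathcal E(v):x(i)=\max_{j\in\mathcal E(v)}x(j)\}$. *)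

(* Defs.v *)
From mathcomp Require Import all_boot all_order.
Set Implicit Arguments. Unset Strict Implicit. Unset Printing Implicit Defensive.

Definition simple_graph (V : finType) (adj : rel V) : Prop :=
  irreflexive adj /\ symmetric adj.
Definition connected_graph (V : finType) (adj : rel V) : Prop :=
  forall i j : V, connect adj i j.

Definition nbrs (V : finType) (adj : rel V) (v : V) : {set V} := [set j | adj v j].

Definition is_state (V : finType) (adj : rel V) (x : {ffun V -> nat}) : Prop :=
  forall i j, adj i j -> x i * x j = 0.

(* a list of preferences: for each class i a linear ordering of E(i),
   represented as a duplicate-free enumeration of E(i) (first = most preferred) *)
Definition is_prefs (V : finType) (adj : rel V) (sigma : V -> seq V) : Prop :=
  forall i, uniq (sigma i) /\ (forall j, (j \in sigma i) = adj i j).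

Definition unitv (V : finType) (v : V) : {ffun V -> nat} :=
  [ffun i => (i == v) : nat].

Definition Pset (V : finType) (adj : rel V) (x : {ffun V -> nat}) (v : V) : {set V} :=
  [set j | adj v j & 0 < x j].

Definition nbmax (V : finType) (adj : rel V) (x : {ffun V -> nat}) (v : V) : nat :=
  \max_(j | adj v j) x j.
Definition Lset (V : finType) (adj : rel V) (x : {ffun V -> nat}) (v : V) : {set V} :=
  [set i | adj v i & x i == nbmax adj x v].

(* p(x,v,sigma): first element of L(x,v) in the ordering sigma(v)
   (default v if there is none, which never happens when P(x,v) is nonempty) *)
Definition pml (V : finType) (adj : rel V) (x : {ffun V -> nat}) (v : V)
  (sigma : V -> seq V) : V :=
  nth v (sigma v) (find (fun i => i \in Lset adj x v) (sigma v)).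

Definition ml_step (V : finType) (adj : rel V) (x : {ffun V -> nat}) (v : V)
  (sigma : V -> seq V) : {ffun V -> nat} :=
  if Pset adj x v == set0 then [ffun i => x i + unitv v i]
  else [ffun i => x i - unitv (pml adj x v sigma) i].

Definition distn (a b : nat) : nat := (a - b) + (b - a).
Definition l1dist (V : finType) (x y : {ffun V -> nat}) : nat :=
  \sum_(i : V) distn (x i) (y i).

(* Main.v *)
Require Import Defs.
From mathcomp Require Import all_boot all_order zify.

Section S.
Variables (V : finType) (adj : rel V) (sigma : V -> seq V) (v : V).
Hypothesis Hsigma : is_prefs adj sigma.

Lemma nbmax_ge (x : {ffun V -> nat}) j : adj v j -> x j <= nbmax adj x v.
Proof. by move=> h; rewrite /nbmax (leq_bigmax_cond _ h). Qed.

Lemma find_le (a : pred V) s k : k < size s -> a (nth v s k) -> find a s <= k.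
Proof.
move=> hk ha; rewrite leqNgt; apply/negP => hlt.
by move: (before_find v hlt); rewrite ha.
Qed.

Lemma pml_props (x : {ffun V -> nat}) : Pset adj x v != set0 ->
  [/\ find (fun i => i \in Lset adj x v) (sigma v) < size (sigma v),
      adj v (pml adj x v sigma), x (pml adj x v sigma) = nbmax adj x v &
      0 < x (pml adj x v sigma)].
Proof.
case/set0Pn => j; rewrite inE => /andP [hj xj].
have [i0 hi0 hmax] : exists2 i0, adj v i0 & nbmax adj x v = x i0.
  have : 0 < #|[pred i | adj v i]|.
    by apply/card_gt0P; exists j.
  move/(eq_bigmax_cond x) => [i0 hi0 e]; exists i0 => //.
have hL : i0 \in Lset adj x v by rewrite inE hi0 hmax eqxx.
have hhas : has (fun i => i \in Lset adj x v) (sigma v).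
  by apply/hasP; exists i0 => //; rewrite (proj2 (Hsigma v)).
have hf := hhas; rewrite has_find in hf.
have := nth_find v hhas; rewrite -/(pml adj x v sigma) inE => /andP [ha /eqP hx].
split => //. rewrite hx; apply: (leq_trans xj); exact: nbmax_ge.
Qed.

Lemma two_point (x x' y y' : {ffun V -> nat}) p q : p != q ->
  (forall i, i != p -> i != q -> y' i = x' i /\ y i = x i) ->
  distn (y' p) (y p) + distn (y' q) (y q) <= distn (x' p) (x p) + distn (x' q) (x q) ->
  l1dist y' y <= l1dist x' x.
Proof.
move=> hpq hoth hloc.
have split2 : forall f : V -> nat, \sum_(i : V) f i =
    f p + f q + \sum_(i | (i != p) && (i != q)) f i.
  move=> f; rewrite (bigD1 p) //= (bigD1 q) /=; last by rewrite eq_sym.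
  by rewrite addnA; congr (_ + _); apply: eq_bigl => i; rewrite andbC.
rewrite /l1dist split2 [X in _ <= X]split2.
rewrite (eq_bigr (fun i => distn (x' i) (x i))); last first.
  by move=> i /andP [h1 h2]; case: (hoth i h1 h2) => -> ->.
by rewrite leq_add2r.
Qed.

Lemma pointwise (x x' y y' : {ffun V -> nat}) :
  (forall i, distn (y' i) (y i) <= distn (x' i) (x i)) -> l1dist y' y <= l1dist x' x.
Proof. by move=> h; apply: leq_sum => i _. Qed.
End S.

Theorem mainTheorem7 (V : finType) (adj : rel V)
  (Hsimple : simple_graph adj) (Hconn : connected_graph adj)
  (x x' : {ffun V -> nat}) (Hx : is_state adj x) (Hx' : is_state adj x')
  (v : V) (sigma : V -> seq V) (Hsigma : is_prefs adj sigma) :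
  l1dist (ml_step adj x' v sigma) (ml_step adj x v sigma) <= l1dist x' x.
Proof.
have Hirr : forall i, adj i i = false by case: Hsimple.
rewrite /ml_step.
case: eqP => [E'|/eqP N']; case: eqP => [E|/eqP N].
- apply: pointwise => i; rewrite !ffunE /distn; lia.
- have [_ ha hxm hxp] := @pml_props _ _ _ _ Hsigma _ N.
  set p := pml adj x v sigma in ha hxm hxp *.
  have hpv : p != v by apply/eqP => e; rewrite e Hirr in ha.
  have hx'p : x' p = 0.
    apply/eqP; rewrite -leqn0 leqNgt; apply/negP => h.
    have : p \in Pset adj x' v by rewrite inE ha h.
    by rewrite E' inE.
  apply: (@two_point V x x' _ _ v p); first by rewrite eq_sym.
    by move=> i h1 h2; rewrite !ffunE (negbTE h1) (negbTE h2) !addn0 subn0.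
  rewrite !ffunE !eqxx (negbTE hpv) [v == p]eq_sym (negbTE hpv) /distn /=; lia.
- have [_ ha hxm hxp] := @pml_props _ _ _ _ Hsigma _ N'.
  set p := pml adj x' v sigma in ha hxm hxp *.
  have hpv : p != v by apply/eqP => e; rewrite e Hirr in ha.
  have hxp0 : x p = 0.
    apply/eqP; rewrite -leqn0 leqNgt; apply/negP => h.
    have : p \in Pset adj x v by rewrite inE ha h.
    by rewrite E inE.
  apply: (@two_point V x x' _ _ v p); first by rewrite eq_sym.
    by move=> i h1 h2; rewrite !ffunE (negbTE h1) (negbTE h2) !addn0 subn0.
  rewrite !ffunE !eqxx (negbTE hpv) [v == p]eq_sym (negbTE hpv) /distn /=; lia.
- have [hk ha hxm hxp] := @pml_props _ _ _ _ Hsigma _ N.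
  have [hk' ha' hxm' hxp'] := @pml_props _ _ _ _ Hsigma _ N'.
  set p := pml adj x v sigma in ha hxm hxp *.
  set q := pml adj x' v sigma in ha' hxm' hxp' *.
  have hqp : x q <= x p by rewrite hxm; apply: nbmax_ge.
  have hpq' : x' p <= x' q by rewrite hxm'; apply: nbmax_ge.
  case: (eqVneq p q) => [epq|npq].
    apply: pointwise => i; rewrite !ffunE -/p -/q epq /distn; lia.
  case: (boolP ((x p <= x' p) && (x' q <= x q))) => [/andP [c1 c2]|nc].
    exfalso; move/eqP: npq; apply.
    have eq1 : x' p = x' q by lia.
    have eq2 : x q = x p by lia.
    have Lp : p \in Lset adj x' v by rewrite inE ha eq1 hxm' eqxx.
    have Lq : q \in Lset adj x v by rewrite inE ha' eq2 hxm eqxx.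
    have h1 := @find_le V v _ _ _ hk Lp.
    have h2 := @find_le V v _ _ _ hk' Lq.
    rewrite /p /q /pml.
    by have -> : find (fun i => i \in Lset adj x v) (sigma v) =
       find (fun i => i \in Lset adj x' v) (sigma v) by apply/eqP; rewrite eqn_leq h1 h2.
  apply: (@two_point V x x' _ _ p q) => //.
    move=> i h1 h2; rewrite !ffunE -/p -/q (negbTE h1) (negbTE h2).
    by rewrite !subn0.
  rewrite !ffunE -/p -/q !eqxx (negbTE npq) eq_sym (negbTE npq) /distn /=.
  move: nc; rewrite negb_and -!ltnNge => nc; case/orP: nc => nc; lia.
Qed.
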